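(* Let $A$ be a local integral domain with infinite residue field and suppose $A^\times=(A^\times)^2$. Then $\mathcal{RB}_0(A)[\tfrac12]=0$ and $\mathcal{RB}(A)[\tfrac12]\cong\mathcal B(A)[\tfrac12]$.
   Context: For a commutative ring $A$: $A^\times$ units; $G_A=A^\times/(A^\times)^2$, $\langle x\rangle$ the class of $x$; $\mathcal R_A=\mathbb Z[G_A]$; $\langle\langle x\rangle\rangle=\langle x\rangle-1$; $\mathcal I_A$ the augmentation ideal; $W_A=\{u\in A^\times:1-u\in A^\times\}$; $M[\tfrac12]=M\otimes\mathbb Z[\tfrac12]$. $\mathcal{RP}(A)$ is the $\mathcal R_A$-module generated by $[x]$, $x\in W_A$, with relations $[x]-[y]+\langle x\rangle[y/x]-\langle x^{-1}-1\rangle\left[\frac{1-x^{-1}}{1-y^{-1}}\right]+\langle 1-x\rangle\left[\frac{1-x}{1-y}\right]=0$ ($x,y,y/x\in W_A$); $\mathcal P(A)=\mathcal{RP}(A)_{G_A}$. With $\tilde S^2(A^\times)=(A^\times\otimes A^\times)/\langle x\otimes y+y\otimes x\rangle$, $\lambda:\mathcal P(A)\to\tilde S^2(A^\times)$, $[x]\mapsto (1-x)\circ x$, $\mathcal B(A)=\ker\lambda$; $\lambda_1:\mathcal{RP}(A)\to\mathcal I_A^2$, $[x]\mapsto\langle\langle1-x\rangle\rangle\langle\langle x\rangle\rangle$; $\lambda_2=\lambda\circ(\mathcal{RP}(A)\to\mathcal P(A))$; $\mathcal{RB}(A)=\ker\lambda_1\cap\ker\lambda_2$; $\mathcal{RB}_0(A)=\ker(\mathcal{RB}(A)\to\mathcal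 B(A))$. *)

(* Defs.v *)
From Stdlib Require List.
From HB Require Import structures.
From mathcomp Require Import all_boot all_order all_algebra.
Set Implicit Arguments. Unset Strict Implicit. Unset Printing Implicit Defensive.
Import GRing.Theory.
Local Open Scope ring_scope.

Definition fsum (T : Type) := seq (int * T).

(* The coefficient of [t]: two formal sums represent the same element of the
   free abelian group Z[T] iff they have the same coefficient function. *)
Definition fcoef (T : eqType) (c : fsum T) (t : T) : int :=
  \sum_(p <- c | p.2 == t) p.1.

Definition fscale (T : Type) (k : int) (c : fsum T) : fsum T :=
  [seq (k * p.1, p.2) | p <- c].

Definition fsub (T : Type) (c d : fsum T) : fsum T := c ++ fscale (-1) d.

Definition fmap (T U : Type) (f : T -> fsum U) (c : fsum T) : fsum U :=
  flatten [seq fscale p.1 (f p.2) | p <- c].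

Definition in_span (T : eqType) (R : fsum T -> Prop) (c : fsum T) : Prop :=
  exists rs : seq (int * fsum T),
    (forall p, List.In p rs -> R p.2) /\
    forall t, fcoef c t = fcoef (flatten [seq fscale p.1 p.2 | p <- rs]) t.

(* c = d in the quotient Z[T] / <R>. *)
Definition equiv (T : eqType) (R : fsum T -> Prop) (c d : fsum T) : Prop :=
  in_span R (fsub c d).

Section Ring.
Variable A : comUnitRingType.

Definition unitb (x : A) : bool := x \is a GRing.unit.

Definition W (x : A) : bool := unitb x && unitb (1 - x).

(* Z[G_A] = Z[A^x / (A^x)^2], presented as Z[A] (supported on units) modulo
   <g u^2> = <g>. *)
Definition ZG_rel (r : fsum A) : Prop :=
  exists g u, unitb g /\ unitb u /\ r = [:: (1%:Z, g * u ^+ 2); (-1, g)].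

(* RP(A) as a Z-module: Z-basis of the free R_A-module on W_A is G_A x W_A;
   a generator <g>[x] is encoded by the pair (g, x) with g a unit, modulo
   <g u^2>[x] = <g>[x], and the R_A-submodule of relations is the Z-span of
   <g> . (five-term relation). *)
Definition RP_rel (r : fsum (A * A)) : Prop :=
  (exists g u x, unitb g /\ unitb u /\ W x /\
      r = [:: (1%:Z, (g * u ^+ 2, x)); (-1, (g, x))]) \/
  (exists g x y, unitb g /\ W x /\ W y /\ W (y / x) /\
      r = [:: (1%:Z, (g, x)); (-1, (g, y)); (1, (g * x, y / x));
              (-1, (g * (x^-1 - 1), (1 - x^-1) / (1 - y^-1)));
              (1, (g * (1 - x), (1 - x) / (1 - y)))]).

(* P(A) = RP(A)_{G_A}: the Z-module generated by [x], x in W_A, modulo the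
   five-term relation with all square classes set to 1. *)
Definition P_rel (r : fsum A) : Prop :=
  exists x y, W x /\ W y /\ W (y / x) /\
    r = [:: (1%:Z, x); (-1, y); (1, y / x);
            (-1, (1 - x^-1) / (1 - y^-1)); (1, (1 - x) / (1 - y))].

(* S~^2(A^x) = (A^x (x)_Z A^x) / <x(x)y + y(x)x>, presented on Z[A x A]
   (supported on pairs of units) modulo bilinearity and the symmetric
   relation.  The class of (a, b) is a o b. *)
Definition S2_rel (r : fsum (A * A)) : Prop :=
  (exists a b c, unitb a /\ unitb b /\ unitb c /\
     r = [:: (1%:Z, (a * b, c)); (-1, (a, c)); (-1, (b, c))]) \/
  (exists a b c, unitb a /\ unitb b /\ unitb c /\
     r = [:: (1%:Z, (a, b * c)); (-1, (a, b)); (-1, (a, c))]) \/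
  (exists a b, unitb a /\ unitb b /\
     r = [:: (1%:Z, (a, b)); (1, (b, a))]).

Definition RP_supp (c : fsum (A * A)) : bool :=
  all (fun p => unitb p.2.1 && W p.2.2) c.
Definition P_supp (d : fsum A) : bool := all (fun p => W p.2) d.

(* lambda_1 : <g>[x] |-> <g> <<1-x>> <<x>>  in Z[G_A] *)
Definition lam1_gen (p : A * A) : fsum A :=
  let g := p.1 in let x := p.2 in
  [:: (1%:Z, g * (1 - x) * x); (-1, g * (1 - x)); (-1, g * x); (1, g)].
Definition lam1 (c : fsum (A * A)) : fsum A := fmap lam1_gen c.

(* the projection RP(A) -> P(A) = RP(A)_{G_A} : <g>[x] |-> [x] *)
Definition piP (c : fsum (A * A)) : fsum A := fmap (fun p => [:: (1%:Z, p.2)]) c.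

Definition lam (d : fsum A) : fsum (A * A) := fmap (fun x => [:: (1%:Z, (1 - x, x))]) d.

Definition lam2 (c : fsum (A * A)) : fsum (A * A) := lam (piP c).

(* c represents an element of RB(A) = ker lambda_1 /\ ker lambda_2 *)
Definition in_RB (c : fsum (A * A)) : Prop :=
  RP_supp c /\ equiv ZG_rel (lam1 c) [::] /\ equiv S2_rel (lam2 c) [::].

(* d represents an element of B(A) = ker lambda *)
Definition in_B (d : fsum A) : Prop :=
  P_supp d /\ equiv S2_rel (lam d) [::].

(* c represents an element of RB_0(A) = ker (RB(A) -> B(A)) *)
Definition in_RB0 (c : fsum (A * A)) : Prop :=
  in_RB c /\ equiv P_rel (piP c) [::].

(* RB_0(A)[1/2] = 0 : every element of RB_0(A) is killed by a power of 2. *)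
Definition RB0_half_zero : Prop :=
  forall c, in_RB0 c -> exists n : nat, equiv RP_rel (fscale (2 ^+ n) c) [::].

Definition RB_B_half_iso : Prop :=
  (forall c, in_RB c -> forall n : nat,
      equiv P_rel (fscale (2 ^+ n) (piP c)) [::] ->
      exists m : nat, equiv RP_rel (fscale (2 ^+ m) c) [::]) /\
  (forall d, in_B d -> exists c (n : nat),
      in_RB c /\ equiv P_rel (piP c) (fscale (2 ^+ n) d)).

(* A is local: the non-units form an ideal (closure under addition suffices). *)
Definition is_local : Prop :=
  forall x y : A, ~~ unitb x -> ~~ unitb y -> ~~ unitb (x + y).

(* the residue field A/m is infinite: for every finite list of elements there
   is an element whose class differs from all their classes (x - y not in m,
   i.e. x - y a unit since A is local). *)
Definition residue_field_infinite : Prop :=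
  forall s : seq A, exists x : A, all (fun y => unitb (x - y)) s.

Definition units_are_squares : Prop :=
  forall u : A, unitb u -> exists v : A, u = v ^+ 2.

End Ring.

(* Main.v *)
Require Import Defs.
From mathcomp Require Import all_boot all_order all_algebra.
From Stdlib Require List.
From mathcomp Require Import ring.
Import GRing.Theory.
Local Open Scope ring_scope.
Section Gen.
Variable T : eqType.
Implicit Types c d : fsum T.

Lemma fcoef_nil t : fcoef ([::] : fsum T) t = 0.
Proof. by rewrite /fcoef big_nil. Qed.

Lemma fcoef_cons k x c t :
  fcoef ((k, x) :: c) t = (if x == t then k else 0) + fcoef c t.
Proof. by rewrite /fcoef big_cons /=; case: (x == t); rewrite ?add0r. Qed.

Lemma fcoef_cat c d t : fcoef (c ++ d) t = fcoef c t + fcoef d t.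
Proof. by rewrite /fcoef big_cat. Qed.

Lemma fcoef_scale k c t : fcoef (fscale k c) t = k * fcoef c t.
Proof.
elim: c => [|[a x] c IH]; first by rewrite /fscale /= !fcoef_nil mulr0.
rewrite /fscale /= fcoef_cons -/(fscale k c) IH fcoef_cons mulrDr.
by case: (x == t); rewrite ?mulr0.
Qed.

Lemma fcoef_sub c d t : fcoef (fsub c d) t = fcoef c t - fcoef d t.
Proof. by rewrite /fsub fcoef_cat fcoef_scale mulN1r. Qed.

Lemma fcoef_flatten (S : Type) (F : S -> fsum T) s t :
  fcoef (flatten (map F s)) t = \sum_(p <- s) fcoef (F p) t.
Proof.
elim: s => [|p s IH]; first by rewrite big_nil fcoef_nil.
by rewrite /= fcoef_cat IH big_cons.
Qed.

Definition span := @in_span T.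

Lemma fsp_ext (R : fsum T -> Prop) c d :
  (forall t, fcoef c t = fcoef d t) -> in_span R c -> in_span R d.
Proof. by move=> e [rs [H1 H2]]; exists rs; split=> // t; rewrite -e. Qed.

Lemma fsp_nil (R : fsum T -> Prop) : in_span R [::].
Proof. by exists [::]; split=> // t; rewrite fcoef_nil. Qed.

Lemma fsp_gen (R : fsum T -> Prop) r : R r -> in_span R r.
Proof.
move=> Hr; exists [:: (1, r)]; split.
  by move=> p [<-|[]].
by move=> t; rewrite /= cats0 fcoef_scale mul1r.
Qed.

Lemma fsp_cat (R : fsum T -> Prop) c d :
  in_span R c -> in_span R d -> in_span R (c ++ d).
Proof.
move=> [r1 [H1 E1]] [r2 [H2 E2]]; exists (r1 ++ r2); split.
  by move=> p Hp; case: (List.in_app_or _ _ _ Hp) => ?; [apply: H1|apply: H2].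
by move=> t; rewrite fcoef_cat E1 E2 map_cat flatten_cat fcoef_cat.
Qed.

Lemma fsp_scale (R : fsum T -> Prop) k c :
  in_span R c -> in_span R (fscale k c).
Proof.
move=> [rs [H1 E1]]; exists [seq (k * p.1, p.2) | p <- rs]; split.
  move=> p Hp; case: (proj1 (List.in_map_iff _ _ _) Hp) => q [<- Hq] /=; exact: H1.
move=> t; rewrite fcoef_scale E1 -map_comp !fcoef_flatten big_distrr /=.
by apply: eq_bigr => p _; rewrite !fcoef_scale mulrA.
Qed.

Lemma fsp_sub (R : fsum T -> Prop) c d :
  in_span R c -> in_span R d -> in_span R (fsub c d).
Proof. by move=> Hc Hd; apply: fsp_cat => //; apply: fsp_scale. Qed.

Lemma sum_if (a : T -> int) x s : uniq s -> x \in s ->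
  \sum_(t <- s) (if x == t then a t else 0) = a x.
Proof.
elim: s => // y s IH /= /andP [ys us]; rewrite in_cons big_cons.
case: eqP => [-> _|ne /= xs]; last by rewrite IH // add0r.
rewrite big_seq big1 ?addr0 // => t ts; case: eqP => // ex.
by move: ys; rewrite ex ts.
Qed.

Lemma sum_coef (h : T -> int) c s : uniq s -> all (fun p => p.2 \in s) c ->
  \sum_(p <- c) p.1 * h p.2 = \sum_(t <- s) fcoef c t * h t.
Proof.
move=> us; elim: c => [|[k x] c IH].
  by rewrite big_nil big1 // => t _; rewrite fcoef_nil mul0r.
move=> /= /andP [xs Hc]; rewrite big_cons IH //.
under [RHS]eq_bigr => t _ do rewrite fcoef_cons mulrDl.
rewrite big_split /=; congr (_ + _).
rewrite -(@sum_if (fun t => k * h t) x s us xs).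
by apply: eq_bigr => t _; case: (x == t); rewrite ?mul0r.
Qed.

End Gen.

Section Map.
Variables T U : eqType.
Implicit Types c d : fsum T.

Lemma fmap_cons (f : T -> fsum U) k x c :
  fmap f ((k, x) :: c) = fscale k (f x) ++ fmap f c.
Proof. by []. Qed.

Lemma fmap_cat (f : T -> fsum U) c d : fmap f (c ++ d) = fmap f c ++ fmap f d.
Proof. by rewrite /fmap map_cat flatten_cat. Qed.

Lemma fcoef_fmap (f : T -> fsum U) c u :
  fcoef (fmap f c) u = \sum_(p <- c) p.1 * fcoef (f p.2) u.
Proof.
by rewrite /fmap fcoef_flatten; apply: eq_bigr => p _; rewrite fcoef_scale.
Qed.

Lemma fmap_ext (f : T -> fsum U) c d :
  (forall t, fcoef c t = fcoef d t) ->
  forall u, fcoef (fmap f c) u = fcoef (fmap f d) u.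
Proof.
move=> e u; rewrite !fcoef_fmap.
set s := undup [seq p.2 | p <- c ++ d].
have us : uniq s by apply: undup_uniq.
rewrite !(@sum_coef _ (fun t => fcoef (f t) u) _ s us).
  by apply: eq_bigr => t _; rewrite e.
- apply/allP => p pd; rewrite mem_undup; apply/mapP; exists p => //.
  by rewrite mem_cat pd orbT.
- apply/allP => p pd; rewrite mem_undup; apply/mapP; exists p => //.
  by rewrite mem_cat pd.
Qed.

Lemma fcoef_fmap_scale (f : T -> fsum U) k c u :
  fcoef (fmap f (fscale k c)) u = k * fcoef (fmap f c) u.
Proof.
rewrite !fcoef_fmap /fscale big_map big_distrr /=.
by apply: eq_bigr => p _; rewrite mulrA.
Qed.

Lemma fsp_fmap (R : fsum T -> Prop) (S : fsum U -> Prop) (f : T -> fsum U) c :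
  (forall r, R r -> in_span S (fmap f r)) -> in_span R c -> in_span S (fmap f c).
Proof.
move=> HR [rs [H1 E1]].
apply: (@fsp_ext _ _ (fmap f (flatten [seq fscale p.1 p.2 | p <- rs]))).
  by move=> u; apply: fmap_ext => t; rewrite E1.
elim: rs H1 {E1} => [|[k r] rs IH] H1; first exact: fsp_nil.
rewrite /= fmap_cat; apply: fsp_cat; last first.
  by apply: IH => p Hp; apply: H1; right.
apply: (@fsp_ext _ _ (fscale k (fmap f r))).
  by move=> u; rewrite fcoef_fmap_scale fcoef_scale.
apply: fsp_scale; apply: HR; exact: (H1 (k, r) (or_introl erefl)).
Qed.

End Map.
Ltac cases_if := repeat match goal with |- context [if ?b then _ else _] => case: b end.

Section Main.
Variable A : idomainType.
Hypothesis hsq : units_are_squares A.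

Definition liftP (d : fsum A) : fsum (A * A) := fmap (fun x => [:: (1, (1, x))]) d.

Lemma fcoef_fmap1 (T U : eqType) (f : T -> fsum U) k x u :
  fcoef (fmap f [:: (k, x)]) u = k * fcoef (f x) u.
Proof. by rewrite fcoef_fmap big_seq1. Qed.

Lemma piP_cons k (p : A * A) c : Defs.piP ((k, p) :: c) = [:: (k * 1, p.2)] ++ Defs.piP c.
Proof. by []. Qed.

Lemma liftP_cat c d : liftP (c ++ d) = liftP c ++ liftP d.
Proof. exact: fmap_cat. Qed.

Lemma liftP_cons k x c : liftP ((k, x) :: c) = [:: (k * 1, (1, x))] ++ liftP c.
Proof. by []. Qed.

Lemma fcoef_liftP1 a x t : fcoef (liftP [:: (a, x)]) t = a * fcoef [:: (1, (1, x))] t.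
Proof. exact: fcoef_fmap1. Qed.

Lemma unitb_sq (g : A) : unitb g -> exists v : A, unitb v /\ g = 1 * v ^+ 2.
Proof.
move=> Ug; have [v ev] := hsq _ Ug; exists v; split; last by rewrite mul1r.
by rewrite /unitb -(unitrX_pos v (n:=2)) // -ev.
Qed.

Lemma sq_rel (g x : A) : unitb g -> W x ->
  in_span (@RP_rel A) [:: (1, (g, x)); (-1, (1, x))].
Proof.
move=> Ug Wx; have [v [Uv ev]] := unitb_sq _ Ug; apply: fsp_gen; left.
by exists 1, v, x; rewrite -ev /unitb unitr1.
Qed.

Lemma sq_all (c : fsum (A * A)) : RP_supp c -> in_span (@RP_rel A) (fsub c (liftP (Defs.piP c))).
Proof.
elim: c => [|[k [g x]] c IH].
  move=> _; rewrite /fsub /liftP /Defs.piP /fmap /fscale /=. exact: (@fsp_nil _ (@RP_rel A)).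
rewrite /RP_supp /= -/(RP_supp c) => /andP [/andP [Ug Wx] Hc].
apply: (@fsp_ext _ _ (fscale k [:: (1, (g, x)); (-1, (1, x))] ++ fsub c (liftP (Defs.piP c)))).
  move=> t; rewrite piP_cons liftP_cat fcoef_cat !fcoef_sub fcoef_cat fcoef_liftP1.
  rewrite fcoef_scale !fcoef_cons !fcoef_nil /=.
  cases_if; ring.
by apply: fsp_cat; [apply: fsp_scale; apply: sq_rel|apply: IH].
Qed.

Lemma unit_inv1 (x : A) : W x -> unitb (x^-1 - 1).
Proof.
move=> /andP []; rewrite /unitb => Ux U1x.
have -> : x^-1 - 1 = x^-1 * (1 - x).
  by rewrite mulrBr mulr1 mulVr.
by rewrite unitrM unitrV Ux.
Qed.

Lemma W_z1 (x y : A) : W x -> W y -> W (y / x) -> W ((1 - x^-1) / (1 - y^-1)).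
Proof.
move=> Wx Wy Wyx.
have Ua : (1 - x^-1) \is a GRing.unit.
  by rewrite -unitrN opprB; apply: unit_inv1.
have Ub : (1 - y^-1) \is a GRing.unit.
  by rewrite -unitrN opprB; apply: unit_inv1.
move: Wx Wy Wyx; rewrite /W /unitb => /andP [Ux _] /andP [Uy _] /andP [_ Uyx].
apply/andP; split; first by rewrite unitrM unitrV Ua Ub.
have -> : 1 - (1 - x^-1) / (1 - y^-1) = (x^-1 * y^-1) * (x * (y/x - 1)) / (1 - y^-1).
  have e1 : x^-1 * y^-1 * (x * (y / x - 1)) = x^-1 - y^-1.
    have -> : x^-1 * y^-1 * (x * (y / x - 1)) =
       (x^-1 * x) * (y^-1 * y) * x^-1 - y^-1 * (x^-1 * x).
      by rewrite /=; ring.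
    by rewrite !mulVr // !mul1r mulr1.
  rewrite e1.
  have e2 : 1 = (1 - y^-1) / (1 - y^-1) by rewrite divrr.
  rewrite {1}e2; ring.
have Uyx' : y / x - 1 \is a GRing.unit by rewrite -unitrN opprB.
by rewrite !unitrM !unitrV Ux Uy Ub Uyx'.
Qed.

Lemma W_z2 (x y : A) : W x -> W y -> W (y / x) -> W ((1 - x) / (1 - y)).
Proof.
rewrite /W /unitb => /andP [Ux U1x] /andP [Uy U1y] /andP [_ Uyx].
apply/andP; split; first by rewrite unitrM unitrV U1x U1y.
have -> : 1 - (1 - x) / (1 - y) = x * (1 - y / x) / (1 - y).
  have e1 : x * (1 - y / x) = x - y.
    have -> : x * (1 - y / x) = x - (x * x^-1) * y by rewrite /=; ring.
    by rewrite mulrV // mul1r.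
  rewrite e1.
  have e2 : 1 = (1 - y) / (1 - y) by rewrite divrr.
  rewrite {1}e2; ring.
by rewrite !unitrM !unitrV Ux U1y Uyx.
Qed.

Lemma RP_supp_cat (c d : fsum (A * A)) : RP_supp (c ++ d) = RP_supp c && RP_supp d.
Proof. exact: all_cat. Qed.

Lemma liftP_rel (r : fsum A) : P_rel r -> in_span (@RP_rel A) (liftP r).
Proof.
move=> [x [y [Wx [Wy [Wyx ->]]]]].
set z1 := (1 - x^-1) / (1 - y^-1); set z2 := (1 - x) / (1 - y).
set r' : fsum (A * A) := [:: (1%:Z, (1, x)); (-1, (1, y)); (1, (1 * x, y / x));
              (-1, (1 * (x^-1 - 1), z1)); (1, (1 * (1 - x), z2))].
have Hr' : in_span (@RP_rel A) r'.
  by apply: fsp_gen; right; exists 1, x, y; rewrite /unitb unitr1.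
have Sr' : RP_supp r'.
  move: (Wx) (Wy) (Wyx) => /andP [Ux U1x] /andP [Uy U1y] _.
  rewrite /RP_supp /= !mul1r Wx Wy Wyx W_z1 // W_z2 // U1x Ux unit_inv1 //.
  by rewrite /unitb unitr1.
have H := @sq_all r' Sr'.
apply: (@fsp_ext _ _ (fsub r' (fsub r' (liftP (Defs.piP r'))))).
  move=> t; rewrite !fcoef_sub.
  have -> : fcoef (liftP (Defs.piP r')) t =
    fcoef (liftP [:: (1%:Z, x); (-1, y); (1, y / x); (-1, z1); (1, z2)]) t.
    apply: fmap_ext => u; rewrite /r' /Defs.piP /fmap /=.
    by rewrite !mulr1.
  ring.
exact: fsp_sub.
Qed.

Lemma G (c : fsum (A * A)) : RP_supp c -> in_span (@P_rel A) (Defs.piP c) -> in_span (@RP_rel A) c.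
Proof.
move=> Sc HP.
apply: (@fsp_ext _ _ (fsub c (liftP (Defs.piP c)) ++ liftP (Defs.piP c))).
  by move=> t; rewrite fcoef_cat fcoef_sub; ring.
apply: fsp_cat; first exact: sq_all.
apply: fsp_fmap HP; exact: liftP_rel.
Qed.

Lemma zg_unit (g : A) : unitb g -> in_span (@ZG_rel A) [:: (1, g); (-1, 1)].
Proof.
move=> Ug; have [v [Uv ev]] := unitb_sq _ Ug; apply: fsp_gen.
by exists 1, v; rewrite -ev /unitb unitr1.
Qed.

Lemma lam1_liftP (d : fsum A) : P_supp d -> in_span (@ZG_rel A) (lam1 (liftP d)).
Proof.
elim: d => [|[k x] d IH]; first by move=> _; rewrite /lam1 /liftP /fmap /=; apply: fsp_nil.
rewrite /P_supp /= -/(P_supp d) => /andP [Wx Hd].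
rewrite liftP_cons /lam1 fmap_cat -/(lam1 (liftP d)).
apply: fsp_cat; last exact: IH.
apply: (@fsp_ext _ _ (fscale k (lam1_gen (1, x)))).
  by move=> u; rewrite fcoef_fmap1 fcoef_scale mulr1.
apply: fsp_scale.
move: Wx; rewrite /W /unitb => /andP [Ux U1x].
apply: (@fsp_ext _ _ ([:: (1, 1 * (1 - x) * x); (-1, 1)] ++
    fscale (-1) [:: (1, 1 * (1 - x)); (-1, 1)] ++ fscale (-1) [:: (1, 1 * x); (-1, 1)])).
  move=> u; rewrite !fcoef_cat !fcoef_scale /lam1_gen /= !fcoef_cons !fcoef_nil.
  cases_if; ring.
apply: fsp_cat; first by apply: zg_unit; rewrite /unitb !unitrM unitr1 Ux U1x.
apply: fsp_cat; apply: fsp_scale; apply: zg_unit;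
  by rewrite /unitb !unitrM unitr1 ?Ux ?U1x.
Qed.

Lemma PL (d : fsum A) t : fcoef (Defs.piP (liftP d)) t = fcoef d t.
Proof.
elim: d => [|[k x] d IH]; first by rewrite /Defs.piP /liftP /fmap /=.
rewrite liftP_cons /Defs.piP fmap_cat -/(Defs.piP (liftP d)) fcoef_cat IH.
rewrite fcoef_fmap1 /= !fcoef_cons !fcoef_nil; cases_if; ring.
Qed.

Lemma supp_liftP (d : fsum A) : P_supp d -> RP_supp (liftP d).
Proof.
elim: d => [|[k x] d IH]; first by [].
rewrite liftP_cons RP_supp_cat /P_supp /= -/(P_supp d) => /andP [Wx Hd].
rewrite IH // /RP_supp /= Wx andbT.
by rewrite /unitb unitr1.
Qed.

Lemma supp_scale k (c : fsum (A * A)) : RP_supp c -> RP_supp (fscale k c).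
Proof. by rewrite /RP_supp /fscale all_map. Qed.

Lemma main3 : RB0_half_zero A /\ RB_B_half_iso A.
Proof.
split; [|split].
- move=> c [[Sc _] hP]; exists 0%N.
  apply: (@fsp_ext _ _ c).
    by move=> t; rewrite fcoef_sub fcoef_nil subr0 expr0 fcoef_scale mul1r.
  apply: G => //; apply: (@fsp_ext _ _ _ _ _ hP) => t; by rewrite fcoef_sub fcoef_nil subr0.
- move=> c [Sc _] n hn; exists n.
  apply: (@fsp_ext _ _ (fscale (2 ^+ n) c)).
    by move=> t; rewrite fcoef_sub fcoef_nil subr0.
  apply: G; first exact: supp_scale.
  apply: (@fsp_ext _ _ _ _ _ hn) => t.
  by rewrite fcoef_sub fcoef_nil subr0 /Defs.piP fcoef_fmap_scale fcoef_scale.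
- move=> d [Sd hl]; exists (liftP d), 0%N; split; [split; [|split]|].
  + exact: supp_liftP.
  + apply: (@fsp_ext _ _ (lam1 (liftP d))).
      by move=> t; rewrite fcoef_sub fcoef_nil subr0.
    exact: lam1_liftP.
  + apply: (@fsp_ext _ _ _ _ _ hl) => t.
    rewrite !fcoef_sub !fcoef_nil !subr0 /lam2 /lam.
    by apply: fmap_ext => u; rewrite PL.
  + apply: (@fsp_ext _ _ [::]); last exact: fsp_nil.
    by move=> t; rewrite fcoef_sub PL fcoef_scale expr0 mul1r subrr fcoef_nil.
Qed.

End Main.

Theorem mainTheorem3 (A : idomainType)
  (hloc : is_local A) (hinf : residue_field_infinite A)
  (hsq : units_are_squares A) :
  RB0_half_zero A /\ RB_B_half_iso A.
Proof. exact: (@main3 A hsq). Qed.
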